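(* If $G$ is a strongly regular graph with parameters $(n,r,e,f)$ and $n \ge 3$, then $\lambda_3(G) < \frac{n}{3}$.
   Context: A graph $G$ is strongly regular with parameters $(n,r,e,f)$ if it has $n$ vertices, is $r$-regular, every two adjacent vertices have exactly $e$ common neighbours, and every two distinct non-adjacent vertices have exactly $f$ common neighbours (disconnected graphs and graphs with disconnected complement are allowed). $\lambda_3(G)$ is the third largest eigenvalue (with multiplicity) of the adjacency matrix of $G$. *)

(* Defs.v *)
From mathcomp Require Import all_boot all_order all_algebra.
Set Implicit Arguments. Unset Strict Implicit. Unset Printing Implicit Defensive.
Import Order.TTheory GRing.Theory Num.Theory.
Local Open Scope ring_scope.

Definition simple_graph (n : nat) (adj : rel 'I_n) : Prop :=
  (forall i j, adj i j = adj j i) /\ (forall i, ~~ adj i i).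

Definition strongly_regular (n : nat) (adj : rel 'I_n) (r e f : nat) : Prop :=
  [/\ simple_graph adj,
      (forall i, #|[set j | adj i j]| = r),
      (forall i j, i != j -> adj i j -> #|[set k | adj i k && adj j k]| = e)
    & (forall i j, i != j -> ~~ adj i j -> #|[set k | adj i k && adj j k]| = f)].

Definition adj_mx (R : nzRingType) (n : nat) (adj : rel 'I_n) : 'M[R]_n :=
  \matrix_(i, j) (adj i j)%:R.

(* s is the spectrum of A listed with multiplicity in nonincreasing order:
   the characteristic polynomial of A factors as prod (X - x) over s. *)
Definition sorted_spectrum (R : rcfType) (n : nat) (A : 'M[R]_n) (s : seq R) :=
  sorted >=%R s /\ char_poly A = \prod_(x <- s) ('X - x%:P).

(* Main.v *)
Require Import Defs.
From mathcomp Require Import all_boot all_order all_algebra.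
From mathcomp Require Import ring lra zify.
Import Order.TTheory GRing.Theory Num.Theory.
Local Open Scope ring_scope.

Lemma char_poly_sq (R : comNzRingType) n (A : 'M[R]_n) (s : seq R) :
  char_poly A = \prod_(x <- s) ('X - x%:P) ->
  char_poly (A *m A) = \prod_(x <- s) ('X - (x^+2)%:P).
Proof.
move=> hA.
have hs : size s = n.
  by have := size_char_poly A; rewrite hA size_prod_XsubC => -[].
pose cX := comp_poly (- 'X : {poly R}).
pose c2 := comp_poly ('X^2 : {poly R}).
have e1 : map_mx cX (char_poly_mx A) = - ('X%:M + map_mx polyC A).
  apply/matrixP => i j; rewrite !mxE /cX.
  case: (i == j); rewrite /= ?mulr1n ?mulr0n raddfB /= ?comp_polyX ?comp_polyC ?comp_poly0; ring.
have e2 : map_mx c2 (char_poly_mx (A *m A)) = ('X^2%:M - map_mx polyC (A *m A)).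
  apply/matrixP => i j; rewrite !mxE /c2.
  case: (i == j); rewrite /= ?mulr1n ?mulr0n raddfB /= ?comp_polyX ?comp_polyC ?comp_poly0 //.
have e3 : char_poly_mx A *m ('X%:M + map_mx polyC A) = ('X^2%:M - map_mx polyC (A *m A)).
  rewrite /char_poly_mx mulmxDr !mulmxBl -scalar_mxM.
  by rewrite map_mxM scalar_mxC expr2 addrA subrK.
have key : c2 (char_poly (A *m A)) = c2 (\prod_(x <- s) ('X - (x^+2)%:P)).
  have : \det (char_poly_mx A *m (- map_mx cX (char_poly_mx A))) =
         \det (map_mx c2 (char_poly_mx (A *m A))).
    by rewrite e1 opprK e3 e2.
  rewrite det_mulmx -scaleN1r detZ !det_map_mx -/(char_poly A) -/(char_poly (A *m A)) => H.
  have -> : c2 (char_poly (A *m A)) = char_poly A * ((-1)^+n * (char_poly A \Po (- 'X))).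
    exact: (esym H).
  rewrite hA /c2 !rmorph_prod /=.
  rewrite mulrCA -hs -big_split /=.
  elim: (s) => [|x t IH]; first by rewrite !big_nil mulr1.
  rewrite !big_cons /= exprS -IH.
  rewrite !raddfB /= !comp_polyX !comp_polyC rmorphXn /=.
  set P := \prod_(j <- t) _. set Q := (-1) ^+ size t. ring.
apply/polyP => i.
have := congr1 (fun p : {poly R} => p`_(2 * i)) key.
by rewrite /c2 /= !coef_comp_poly_Xn // dvdn_mulr // mulKn.
Qed.


Arguments char_poly_sq {R n A s}.

Lemma t1 (R : realFieldType) (n r th : R) : 3 <= n -> 0 <= r -> n / 3 <= th ->
  r + 2 * th - (n - 3) = 0 -> r^+2 + 2 * th^+2 + (n - 3) = n * r -> False.
Proof. move=> *. nra. Qed.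

Lemma t2 (R : realFieldType) (n r th ta : R) : 3 <= n -> 0 <= r -> r <= n - 1 -> n / 3 <= th -> ta <= -2 ->
  r + 2 * th + (n - 3) * ta = 0 -> r^+2 + 2 * th^+2 + (n - 3) * ta^+2 = n * r -> False.
Proof. move=> *. nra. Qed.

Lemma t3 (R : realFieldType) (r th ta : R) : 0 <= r -> 5 / 3 <= th -> ta <= 0 ->
  r + 2 * th + 2 * ta = 0 -> r^+2 + 2 * th^+2 + 2 * ta^+2 = 5 * r -> False.
Proof. move=> h0 h1 h2 h3 h4.
have hr : r = -2 * (th + ta) by lra.
rewrite hr in h4.
have a1 : 0 <= (th - 5/3) * (- ta) by apply: mulr_ge0; lra.
have a2 : 0 <= (th - 5/3) ^+ 2 by apply: sqr_ge0.
have a3 : 0 <= (th + ta) ^+ 2 by apply: sqr_ge0.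
have a4 : 0 <= (ta + 35/18) ^+ 2 by apply: sqr_ge0.
nra. Qed.

Lemma t4 (R : realFieldType) (n r th : R) : n / 3 <= th -> 0 < n -> 
   r^+2 + 3 * th^+2 <= n * r -> False.
Proof. move=> h1 h2 h3.
have a1 : n^+2 / 9 <= th^+2.
  have : 0 <= (th - n/3) * (th + n/3) by apply: mulr_ge0; lra.
  lra.
have a2 : 0 <= (2 * r - n) ^+ 2 by apply: sqr_ge0.
have a3 : 0 < n ^+ 2 by apply: exprn_gt0.
nra. Qed.


Lemma nat_rr (k d m : nat) : (0 < d)%N -> (gcdn k d %| m)%N -> (k * k = d * m)%N -> (d %| k)%N.
Proof.
move=> d0 gm e.
set g := gcdn k d.
have g0 : (0 < g)%N by rewrite gcdn_gt0 d0 orbT.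
have hk : k = (k %/ g * g)%N by rewrite divnK // dvdn_gcdl.
have hd : d = (d %/ g * g)%N by rewrite divnK // dvdn_gcdr.
have hm : m = (m %/ g * g)%N by rewrite divnK.
set k' := (k %/ g)%N in hk; set d' := (d %/ g)%N in hd; set m' := (m %/ g)%N in hm.
have cop : coprime k' d'.
  have h : (gcdn k' d' * g = 1 * g)%N by rewrite mul1n muln_gcdl -hk -hd.
  by rewrite /coprime -(eqn_pmul2r g0) h.
clearbody k' d' m' g.
have e' : (k' * k' = d' * m')%N.
  apply/eqP; rewrite -(@eqn_pmul2r (g * g)) ?muln_gt0 ?g0 //; apply/eqP.
  move: e; rewrite {1 2}hk hd {1}hm => e; by rewrite -mulnACA e mulnACA.
have dk : (d' %| k')%N.
  have cop' : coprime d' k' by rewrite coprime_sym.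
  by rewrite -(Gauss_dvdr k' cop') e' dvdn_mulr.
have d1 : d' = 1%N.
  apply/eqP; rewrite -dvdn1; move: cop; rewrite /coprime => /eqP <-.
  by rewrite dvdn_gcd dk dvdnn.
by rewrite hd d1 mul1n hk dvdn_mull.
Qed.

Lemma int_rr (K d b c : int) : d != 0 -> K ^+ 2 = d * (b * K + c * d) -> (d %| K)%Z.
Proof.
move=> d0 e.
rewrite dvdzE; apply: (@nat_rr _ _ (absz (b * K + c * d))).
- by rewrite absz_gt0.
- have : (gcdz K d %| b * K + c * d)%Z.
    by apply: rpredD; apply: dvdz_mull; [apply: dvdz_gcdl | apply: dvdz_gcdr].
  by rewrite dvdzE /gcdz.
- by rewrite -!abszM -e expr2.
Qed.


Section Seqs.
Variable R : numDomainType.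
Implicit Types (s : seq R) (a b c : R).

Lemma sum_cnt s a (g : R -> R) : (forall x, x \in s -> g x = if x == a then g a else 0) ->
  \sum_(x <- s) g x = (count_mem a s)%:R * g a.
Proof.
elim: s => [|y t IH] H; first by rewrite big_nil mul0r.
rewrite big_cons IH; last by move=> x hx; apply: H; rewrite inE hx orbT.
rewrite H ?mem_head //= natrD; case: (y == a) => /=; ring.
Qed.

Lemma count_le1 s a (P : pred R) : (forall x, x \in s -> P x -> x = a) ->
  (count P s <= count_mem a s)%N.
Proof.
elim: s => [|y t IH] H //=.
apply: leq_add; last by apply: IH => x hx; apply: H; rewrite inE hx orbT.
case hP: (P y) => //; by rewrite (H y (mem_head _ _) hP) eqxx.
Qed.

Lemma count_le2 s a b (P : pred R) : (forall x, x \in s -> P x -> x = a \/ x = b) ->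
  (count P s <= count_mem a s + count_mem b s)%N.
Proof.
elim: s => [|y t IH] H //=.
have IH' := IH (fun x hx => H x (@mem_behead _ (y :: t) x hx)).
case hP: (P y); last first.
  by rewrite add0n; apply: (leq_trans IH'); apply: leq_add; apply: leq_addl.
have [->|->] := H y (mem_head _ _) hP; rewrite eqxx /= !add1n ?addSn ?addnS ltnS;
  apply: (leq_trans IH'); apply: leq_add => //; apply: leq_addl.
Qed.

Lemma sum3 s a b c (g : R -> R) : a != b -> a != c -> b != c ->
  (forall x, x \in s -> [\/ x = a, x = b | x = c]) ->
  \sum_(x <- s) g x = (count_mem a s)%:R * g a + (count_mem b s)%:R * g b
     + (count_mem c s)%:R * g c /\
  size s = (count_mem a s + count_mem b s + count_mem c s)%N.
Proof.
move=> ab ac bc; elim: s => [|y t IH] H; first by rewrite big_nil !mul0r !addr0.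
have [IH1 IH2] := IH (fun x hx => H x (@mem_behead _ (y :: t) x hx)).
rewrite big_cons IH1 /= IH2.
have [->|->|->] := H y (mem_head _ _).
- rewrite eqxx (negbTE ab) (negbTE ac) /= !natrD; split; [ring | lia].
- rewrite eqxx eq_sym (negbTE ab) (negbTE bc) /= !natrD; split; [ring | lia].
- rewrite eqxx eq_sym (negbTE ac) eq_sym (negbTE bc) /= !natrD; split; [ring | lia].
Qed.

Lemma sum2 s a b (g : R -> R) : a != b ->
  (forall x, x \in s -> x = a \/ x = b) ->
  \sum_(x <- s) g x = (count_mem a s)%:R * g a + (count_mem b s)%:R * g b /\
  size s = (count_mem a s + count_mem b s)%N.
Proof.
move=> ab; elim: s => [|y t IH] H; first by rewrite big_nil !mul0r !addr0.
have [IH1 IH2] := IH (fun x hx => H x (@mem_behead _ (y :: t) x hx)).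
rewrite big_cons IH1 /= IH2.
have [->|->] := H y (mem_head _ _).
- rewrite eqxx (negbTE ab) /= !natrD; split; [ring | lia].
- rewrite eqxx eq_sym (negbTE ab) /= !natrD; split; [ring | lia].
Qed.

End Seqs.


Lemma sum_quad (R : comNzRingType) (s : seq R) (b c : R) :
  \sum_(x <- s) (x ^+ 2 - b * x - c) = \sum_(x <- s) x ^+ 2 - b * \sum_(x <- s) x - c * (size s)%:R.
Proof.
elim: s => [|y t IH]; first by rewrite !big_nil /=; ring.
have -> : (size (y :: t))%:R = (size t)%:R + 1 :> R by rewrite /= mulrS addrC.
rewrite !big_cons IH; ring. Qed.



Lemma core (R : rcfType) (n r e f : nat) (s : seq R) :
  (3 <= n)%N -> (r < n)%N -> (f <= r)%N -> size s = n -> sorted >=%R s ->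
  (r%:R ^+ 2 - (e%:R - f%:R) * r%:R - (r%:R - f%:R) = n%:R * f%:R :> R) ->
  \sum_(x <- s) x = 0 -> \sum_(x <- s) x ^+ 2 = n%:R * r%:R ->
  (forall x, x \in s -> (x - r%:R) * (x ^+ 2 - (e%:R - f%:R) * x - (r%:R - f%:R)) = 0) ->
  s`_2 < n%:R / 3.
Proof.
move=> n3 rn fr hs srt cnt S1 S2 hroot.
rewrite ltNge; apply/negP => h2.
set N := n%:R / 3 : R.
have n3R : 3 <= n%:R :> R by rewrite (ler_nat R 3 n).
have Npos : 0 < N by rewrite /N; lra.
have r0 : 0 <= r%:R :> R by [].
have rnR : r%:R <= n%:R - 1 :> R.
  have h : (r.+1)%:R <= n%:R :> R by rewrite ler_nat.
  by rewrite mulrS in h; lra.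
have [x0 [x1 [x2 [t hst]]]] : exists x0 x1 x2 t, s = [:: x0, x1, x2 & t].
  case E: s => [|y0 [|y1 [|y2 t]]]; rewrite E /= in hs; try (rewrite -hs in n3; by []).
  by exists y0, y1, y2, t.
have hx2 : N <= x2 by move: h2; rewrite hst.
move: srt; rewrite hst /= => /and3P [h01 h12 _].
have hx0 : N <= x0 by apply: (le_trans hx2); apply: (le_trans h12).
have hx1 : N <= x1 by apply: (le_trans hx2).
have cnt3 : (3 <= count (fun x : R => (N <= x)%R) s)%N by rewrite hst /= hx0 hx1 hx2.
have mem0 : x0 \in s by rewrite hst mem_head.
case: (posnP f) => [f0 | fpos].
-
  rewrite f0 /= ?mulr0n ?mul0r ?mulr0 ?addr0 ?subr0 in cnt hroot.
  case: (posnP r) => [r0' | rpos].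
    rewrite r0' mulr0 in S2.
    move: S2; rewrite hst big_cons.
    have : 0 <= \sum_(x <- [:: x1, x2 & t]) x ^+ 2 by apply: sumr_ge0 => x _; apply: sqr_ge0.
    have : 0 < x0 ^+ 2 by apply: exprn_gt0; lra.
    lra.
  have rR : 0 < r%:R :> R by rewrite ltr0n.
  have he : r%:R = 1 + e%:R :> R.
    apply: (mulIf (lt0r_neq0 rR)); rewrite mulrDl mul1r -expr2; move: cnt; clear; lra.
  have hx : forall x, x \in s -> x = r%:R \/ x = -1.
    move=> x /hroot.
    have -> : x ^+ 2 - e%:R * x - r%:R = (x - r%:R) * (x + 1) by rewrite he; ring.
    move/eqP; rewrite !mulf_eq0 !subr_eq0 orbA orbb => /orP [/eqP -> | ]; first by left.
    by rewrite addr_eq0 => /eqP ->; right.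
  have rn1 : r%:R != -1 :> R by rewrite gt_eqF // (lt_le_trans (ltrN10 R) r0).
  have [s1 sz] := @sum2 _ s _ _ id rn1 hx.
  rewrite S1 /= in s1.
  have c1 : (count (fun x : R => (N <= x)%R) s <= count_mem r%:R s)%N.
    apply: count_le1 => x /hx [-> //|->] hN; lra.
  have hr : N <= r%:R.
    case: (hx x0 mem0) => h; first by rewrite -h.
    by move: hx0; rewrite h => ?; lra.
  have k3 : 3 <= (count_mem (r%:R : R) s)%:R :> R.
    by rewrite (ler_nat R 3); apply: leq_trans cnt3 c1.
  have nR : n%:R = (count_mem (r%:R : R) s)%:R + (count_mem (-1 : R) s)%:R :> R.
    by rewrite -natrD -sz hs.
  move: s1 nR k3 hr; rewrite /N.
  set ka := (count_mem _ s)%:R; set kb := (count_mem _ s)%:R => s1 nR k3 hr.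
  have : 0 <= (ka - 3) * (r%:R + 1) by apply: mulr_ge0; lra.
  nra.
-
  set b := e%:R - f%:R : R; set c := r%:R - f%:R : R.
  have c0 : 0 <= c by rewrite subr_ge0 ler_nat.
  set D := b ^+ 2 + 4 * c.
  have D0 : 0 <= D by rewrite /D; have := sqr_ge0 b; lra.
  set sD := Num.sqrt D.
  have sD0 : 0 <= sD by apply: sqrtr_ge0.
  have sD2 : sD ^+ 2 = D by rewrite sqr_sqrtr.
  set th := (b + sD) / 2; set ta := (b - sD) / 2.
  have hq : forall x, x ^+ 2 - b * x - c = (x - th) * (x - ta).
    move=> x; rewrite /th /ta.
    have -> : c = (D - b ^+ 2) / 4 by rewrite /D; field.
    by rewrite -sD2; field.
  have fR : 0 < f%:R :> R by rewrite ltr0n.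
  have nR0 : 0 < n%:R :> R by lra.
  have qr : r%:R ^+ 2 - b * r%:R - c = n%:R * f%:R.
    exact: cnt.
  have nf0 : n%:R * f%:R != 0 :> R by apply: lt0r_neq0; apply: mulr_gt0.
  have Sq : \sum_(x <- s) (x ^+ 2 - b * x - c) = n%:R * f%:R.
    rewrite sum_quad S1 S2 hs /c; ring.
  have kr1 : count_mem (r%:R : R) s = 1%N.
    move: Sq; rewrite (@sum_cnt _ s r%:R (fun x => x ^+ 2 - b * x - c)); last first.
      move=> x /hroot; case: eqP => [-> //|/eqP]; rewrite -subr_eq0 => hne.
      by move/eqP; rewrite mulf_eq0 (negbTE hne) /= => /eqP.
    rewrite qr => h.
    have : (count_mem (r%:R : R) s)%:R = 1 :> R.
      by apply: (mulIf nf0); rewrite h mul1r.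
    by move/eqP; rewrite pnatr_eq1 => /eqP.
  have hx : forall x, x \in s -> [\/ x = r%:R, x = th | x = ta].
    move=> x /hroot; rewrite hq => /eqP; rewrite !mulf_eq0 !subr_eq0 => /orP [/eqP -> | /orP [/eqP -> | /eqP ->]];
      by [apply: Or31 | apply: Or32 | apply: Or33].
  have thta : ta <= th by rewrite /th /ta; lra.
  have hth : N <= th.
    rewrite leNgt; apply/negP => hlt.
    have : (count (fun x : R => (N <= x)%R) s <= count_mem (r%:R : R) s)%N.
      apply: count_le1 => x /hx [-> //| -> | ->] /= hN; lra.
    by rewrite kr1; move=> h; move: (leq_trans cnt3 h).
  have prod : th * ta = - c.
    rewrite /th /ta; have -> : c = (D - b ^+ 2) / 4 by rewrite /D; field.
    by rewrite -sD2; field.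
  have ta0 : ta <= 0.
    rewrite leNgt; apply/negP => h.
    have : 0 < th * ta by apply: mulr_gt0; lra.
    lra.
  have qth : th ^+ 2 - b * th - c = 0 by rewrite hq subrr mul0r.
  have qta : ta ^+ 2 - b * ta - c = 0 by rewrite hq subrr mulr0.
  have rth : r%:R != th by apply/eqP => h; move: qr; rewrite h qth => /eqP; rewrite eq_sym (negbTE nf0).
  have rta : r%:R != ta by apply/eqP => h; move: qr; rewrite h qta => /eqP; rewrite eq_sym (negbTE nf0).
  have thta' : th != ta by rewrite gt_eqF // (le_lt_trans ta0) // (lt_le_trans Npos hth).
  have k2 : (2 <= count_mem th s)%N.
    have : (count (fun x : R => (N <= x)%R) s <= count_mem (r%:R : R) s + count_mem th s)%N.
      apply: count_le2 => x /hx [-> | -> | ->] hN; [by left | by right |].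
      by move: (le_trans hN ta0); rewrite leNgt Npos.
    by rewrite kr1 => h; move: (leq_trans cnt3 h); rewrite add1n ltnS.
  have [s1 sz] := @sum3 _ s _ _ _ id rth rta thta' hx.
  have [s2 _] := @sum3 _ s _ _ _ (fun x => x ^+ 2) rth rta thta' hx.
  rewrite S1 kr1 /= mul1r in s1; rewrite S2 kr1 /= mul1r in s2.
  rewrite kr1 hs in sz.
  have [k3 | k2'] := leqP 3 (count_mem th s).
    apply: (@t4 R n%:R r%:R th) => //.
    have h1 : 3 * th ^+ 2 <= (count_mem th s)%:R * th ^+ 2.
      by apply: ler_wpM2r; [apply: sqr_ge0 | rewrite (ler_nat R 3)].
    have h2' : 0 <= (count_mem ta s)%:R * ta ^+ 2 by apply: mulr_ge0 => //; apply: sqr_ge0.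
    lra.
  have kth : count_mem th s = 2%N by apply/anti_leq; rewrite k2 andbT -ltnS.
  have kta : (count_mem ta s)%:R = n%:R - 3 :> R.
    by rewrite sz kth !natrD; ring.
  rewrite kth kta in s1 s2.
  have bsum : th + ta = b by rewrite /th /ta; field.
  have E1 : r%:R + 2 * th + (n%:R - 3) * ta = 0 by rewrite s1.
  have E2 : r%:R ^+ 2 + 2 * th ^+ 2 + (n%:R - 3) * ta ^+ 2 = n%:R * r%:R by rewrite s2.
  have th0 : 0 < th by lra.
  case: (eqVneq n 5%N) => [n5 | n5].
    have h53 : 5 / 3 <= th by move: hth; rewrite /N n5.
    rewrite n5 in E1 E2; apply: (@t3 R r%:R th ta) => //.
    - by move: E1; clear; lra.
    - by move: E2; clear; lra.
  have hta : ta = b - th by rewrite -bsum; ring.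
  have key : (n%:R - 5) * th = r%:R + (n%:R - 3) * b.
    apply/eqP; rewrite -subr_eq0; apply/eqP; rewrite -oppr0 -E1 hta; ring.
  set bz := (e%:Z - f%:Z); set cz := (r%:Z - f%:Z).
  set d := (n%:Z - 5%:Z); set K := r%:Z + (n%:Z - 3%:Z) * bz.
  have hb : b = bz%:~R by rewrite /bz intrB -!pmulrn.
  have hc : c = cz%:~R by rewrite /cz intrB -!pmulrn.
  have dR : d%:~R = n%:R - 5 :> R by rewrite /d intrB -!pmulrn.
  have KR : K%:~R = r%:R + (n%:R - 3) * b :> R.
    by rewrite /K intrD intrM intrB -!pmulrn hb.
  have hdth : d%:~R * th = K%:~R by rewrite dR KR key.
  have dnz : d != 0.
    by rewrite /d subr_eq0; apply/eqP => h; move: n5; rewrite -[n]/(absz n%:Z) h.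
  clearbody K d.
  have KRe : (K%:~R : R) ^+ 2 = d%:~R * (b * K%:~R + c * d%:~R).
    rewrite -hdth; apply/eqP; rewrite -subr_eq0; apply/eqP.
    transitivity ((d%:~R : R) ^+ 2 * (th ^+ 2 - b * th - c)); first ring.
    by rewrite qth mulr0.
  have Kint : K ^+ 2 = d * (bz * K + cz * d).
    apply/eqP; rewrite -(eqr_int R); apply/eqP.
    by rewrite rmorphXn /= intrM intrD !intrM -hb -hc KRe.
  have dvd := @int_rr K d bz cz dnz Kint.
  have Kz : K = (K %/ d)%Z * d by rewrite divzK.
  set z := (K %/ d)%Z in Kz.
  have dR0 : (d%:~R : R) != 0 by rewrite intr_eq0.
  have thz : th = z%:~R.
    by apply: (mulIf dR0); rewrite mulrC hdth Kz intrM.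
  set w := bz - z.
  have taw : ta = w%:~R by rewrite hta hb thz /w intrB.
  have ta_ne0 : ta != 0.
    apply/eqP => h0; move: E1 th0 r0; rewrite h0; clear; lra.
  have wneg : w < 0.
    by rewrite -(ltr_int R) -taw lt_neqAle ta_ne0 ta0.
  have [wm1 | wm2] : w = -1 \/ w <= -2 by move: wneg; clearbody w; clear; lia.
    have tam1 : ta = -1 by rewrite taw wm1.
    apply: (@t1 R n%:R r%:R th) => //.
    - by move: E1; rewrite tam1; clear; lra.
    - by move: E2; rewrite tam1 sqrrN expr1n mulr1.
  have tam2 : ta <= -2.
    rewrite taw; have : (w%:~R : R) <= (-2 : int)%:~R by rewrite ler_int.
    by [].
  by apply: (@t2 R n%:R r%:R th ta).
Qed.


Lemma sum_card (T : finType) (P : pred T) : (\sum_(k : T) (P k : nat))%N = #|[set k | P k]|.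
Proof. rewrite -sum1_card [RHS]big_mkcond /=; apply: eq_bigr => k _; rewrite inE; by case: (P k). Qed.

Lemma sumR_card (R : nzRingType) (T : finType) (P : pred T) :
  \sum_(k : T) ((P k)%:R : R) = (#|[set k | P k]|)%:R.
Proof. by rewrite -sum_card natr_sum. Qed.

Theorem theorem3p1 (R : rcfType) (n : nat) (adj : rel 'I_n) (r e f : nat)
  (s : seq R) :
  strongly_regular adj r e f -> (3 <= n)%N ->
  sorted_spectrum (adj_mx R adj) s ->
  s`_2 < n%:R / 3.
Proof.
move=> [[sym irr] deg hE hF] n3 [srt cp].
set A := adj_mx R adj.
have n0 : (0 < n)%N by apply: leq_trans n3.
have hs : size s = n.
  by have := size_char_poly A; rewrite cp size_prod_XsubC => -[].
have i0 : 'I_n := Ordinal n0.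
pose J := (const_mx 1 : 'M[R]_n).
have AA : forall i j, (A *m A) i j = (#|[set k | adj i k && adj j k]|)%:R.
  move=> i j; rewrite !mxE -sumR_card; apply: eq_bigr => k _.
  by rewrite !mxE (sym k j) -natrM mulnb.
have AJ : A *m J = r%:R *: J.
  apply/matrixP => i j; rewrite !mxE -(deg i) -sumR_card mulr1.
  by apply: eq_bigr => k _; rewrite !mxE mulr1.
have JA : J *m A = r%:R *: J.
  apply/matrixP => i j; rewrite !mxE -(deg j) -sumR_card mulr1.
  by apply: eq_bigr => k _; rewrite !mxE mul1r sym.
have JJ : J *m J = n%:R *: J.
  apply/matrixP => i j; rewrite !mxE mulr1.
  by rewrite (eq_bigr (fun _ => 1)) ?sumr_const ?card_ord // => k _; rewrite !mxE mulr1.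
have trA : \tr A = 0 by apply: big1 => i _; rewrite mxE (negbTE (irr i)).
have trAA : \tr (A *m A) = n%:R * r%:R.
  rewrite /mxtrace (eq_bigr (fun _ => r%:R)) ?sumr_const ?card_ord; first by rewrite mulr_natl.
  move=> i _; rewrite AA -(deg i); congr (_%:R); apply: eq_card => k; by rewrite !inE andbb.
have S1 : \sum_(x <- s) x = 0.
  have := char_poly_trace A n0; rewrite cp -{1}hs coefPn_prod_XsubC ?hs -?lt0n //.
  by rewrite trA oppr0 => /eqP; rewrite oppr_eq0 => /eqP.
have S2 : \sum_(x <- s) x ^+ 2 = n%:R * r%:R.
  have := char_poly_trace (A *m A) n0; rewrite (char_poly_sq cp).
  rewrite -(big_map (fun x => x ^+ 2) xpredT (fun y => 'X - y%:P)).
  rewrite -{1}hs -(size_map (fun x => x ^+ 2)) coefPn_prod_XsubC ?size_map ?hs -?lt0n //.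
  by rewrite trAA big_map => /eqP; rewrite eqr_opp => /eqP.
pose f' : nat := if [exists i, exists j, (i != j) && ~~ adj i j] then f else 0%N.
have AA' : forall i j, (A *m A) i j = (if i == j then r else if adj i j then e else f')%:R.
  move=> i j; rewrite AA; case: eqVneq => [<- | ne].
    by rewrite -(deg i); congr (_%:R); apply: eq_card => k; rewrite !inE andbb.
  case hij: (adj i j); first by rewrite hE.
  rewrite /f' ifT; first by rewrite hF // hij.
  by apply/existsP; exists i; apply/existsP; exists j; rewrite ne hij.
pose b : R := e%:R - f'%:R; pose c : R := r%:R - f'%:R.
have hM : A *m A - b *: A - c%:M = f'%:R *: J.
  apply/matrixP => i j; have := AA' i j; rewrite !mxE => ->; case: eqVneq => [<- | ne].
    by rewrite (negbTE (irr i)) /= /b /c mulr0 mulr1n; ring.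
  rewrite /= mulr0n subr0 mulr1.
  by case: (adj i j) => /=; rewrite /b ?mulr1 ?mulr0 ?subr0 //; ring.
have qr : r%:R ^+ 2 - b * r%:R - c = n%:R * f'%:R.
  have E : (r%:R ^+ 2 - b * r%:R - c) *: J = (n%:R * f'%:R) *: J.
    have := congr1 (fun M => M *m J) hM.
    rewrite !mulmxBl -mulmxA AJ -!scalemxAl -scalemxAr AJ JJ mul_scalar_mx !scalerA.
    by rewrite -!scalerBl => ->; rewrite mulrC.
  by have := congr1 (fun M : 'M[R]_n => M i0 i0) E; rewrite !mxE !mulr1.
have hroot : forall x, x \in s -> (x - r%:R) * (x ^+ 2 - b * x - c) = 0.
  move=> x xs.
  have : eigenvalue A x by rewrite eigenvalue_root_char cp root_prod_XsubC.
  move=> /eigenvalueP [v vA vn0].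
  have h0 : v *m ((A *m A - b *: A - c%:M) *m (A - (r%:R : R)%:M)) = 0.
    rewrite hM -scalemxAl mulmxBr JA mul_mx_scalar subrr scaler0.
    by rewrite mulmx0.
  have h1 : v *m (A *m A - b *: A - c%:M) = (x ^+ 2 - b * x - c) *: v.
    rewrite !mulmxBr mulmxA vA -scalemxAl vA -scalemxAr vA mul_mx_scalar scalerA.
    by rewrite expr2 scalerA -!scalerBl.
  move: h0; rewrite mulmxA h1 -scalemxAl mulmxBr vA mul_mx_scalar -scalerBl scalerA.
  move/eqP; rewrite scalemx_eq0 (negbTE vn0) orbF => /eqP h; rewrite mulrC; exact: h.
have fr : (f' <= r)%N.
  rewrite /f'; case: existsP => [[i /existsP [j /andP [ne nadj]]] | _] //.
  rewrite -(hF i j ne nadj) -(deg i); apply: subset_leq_card.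
  by apply/subsetP => k; rewrite !inE => /andP [].
have rn : (r < n)%N.
  rewrite -(deg i0).
  apply: (@leq_ltn_trans #|[set~ i0]|); last by rewrite cardsC1 card_ord prednK.
  apply: subset_leq_card; apply/subsetP => k; rewrite !inE.
  by apply: contraTN => /eqP ->; apply: irr.
apply: (@core R n r e f' s) => //.
Qed.
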